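(* Let $x=(x_1,\dots,x_n)$, $u$ an indeterminate, $t=(t_1,t_2,\dots)$. Then $$\prod_{i=1}^n(u\oplus x_i)=(u|t)^n+\sum_{r=1}^n(u|t)^{n-r}\big(1+\beta\,u\oplus t_{n+1-r}\big)G_{1^r}(x|\ominus t).$$ Setting $t_j=0$ for all $j$ this becomes $$\prod_{i=1}^n(u\oplus x_i)=u^n+(1+\beta u)\sum_{r=1}^nu^{n-r}G_{1^r}(x_1,\dots,x_n),$$ and for $r=1,\dots,n$ $$e_r(x_1,\dots,x_n)=\sum_{s=r}^n(-\beta)^{s-r}\binom{s-1}{s-r}G_{1^s}(x_1,\dots,x_n),$$ where $e_r$ is the elementary symmetric polynomial.
   Context: $\beta$ indeterminate, $x\oplus y=x+y+\beta xy$, $x\ominus y=(x-y)/(1+\beta y)$, $\ominus x=-x/(1+\beta x)$, $\ominus t=(\ominus t_1,\ominus t_2,\dots)$. $(u|t)^m=\prod_{i=1}^m(u\oplus t_i)$. $1^r$ is the partition with $r$ parts equal to $1$. Factorial Grothendieck polynomial: $G_\lambda(x|s)=\sum_T\beta^{|T|-|\lambda|}\prod_{(i,j)\in\lambda}\prod_{r\in T(i,j)}(x_r\oplus s_{r+j-i})$, summed over set-valued tableaux $T$ of shape $\lambda$ (nonempty subsets of $[n]$ in the boxes $(i,j)$, row $i$ column $j$, with $\max T(i,j)\le\min T(i,j+1)$, $\max T(i,j)<\min T(i+1,j)$), $|T|$ the total number of entries; $G_\lambda(x_1,\dots,x_n)$ denotes $G_\lambda(x|s)$ with all $s_j=0$.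 *)

(* Defs.v *)
From HB Require Import structures.
From mathcomp Require Import all_boot all_order all_algebra.
Set Implicit Arguments. Unset Strict Implicit. Unset Printing Implicit Defensive.
Import Order.TTheory GRing.Theory Num.Theory.
Local Open Scope ring_scope.

Section Groth.
Variable F : fieldType.
Variable beta : F.

Definition oplus (a b : F) : F := a + b + beta * a * b.
Definition ominus1 (a : F) : F := - a / (1 + beta * a).

(* (u|t)^m = prod_{i=1}^m (u (+) t_i); sequences t are 1-indexed: t j = t_j *)
Definition fpow (u : F) (t : nat -> F) (m : nat) : F :=
  \prod_(1 <= i < m.+1) oplus u (t i).

(* Boxes of the Young diagram of lam, 0-based (row i, column j);
   the paper's box (i+1, j+1). *)
Definition inbox (lam : seq nat) (p : 'I_(size lam) * 'I_(head 0%N lam)) : bool :=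
  (p.2 < nth 0%N lam p.1)%N.

(* Set-valued tableaux of shape lam with entries in [n] (entry r : 'I_n is the
   number r+1); boxes outside lam carry set0. *)
Definition is_svt (lam : seq nat) (n : nat)
  (T : {ffun 'I_(size lam) * 'I_(head 0%N lam) -> {set 'I_n}}) : bool :=
  [forall p, if inbox p then T p != set0 else T p == set0] &&
  [forall p, forall q,
     (inbox p && inbox q && (q.1 == p.1 :> nat) && (q.2 == p.2.+1 :> nat)) ==>
     [forall a in T p, forall b in T q, (a <= b)%N]] &&
  [forall p, forall q,
     (inbox p && inbox q && (q.2 == p.2 :> nat) && (q.1 == p.1.+1 :> nat)) ==>
     [forall a in T p, forall b in T q, (a < b)%N]].

(* Factorial Grothendieck polynomial G_lam(x|s), x = (x_1..x_n) given as
   x : 'I_n -> F (x r = x_{r+1}), s 1-indexed (s k = s_k).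
   For the entry r+1 in box (i+1, j+1) the factor is x_{r+1} (+) s_{r+1+j-i}. *)
Definition G (lam : seq nat) (n : nat) (x : 'I_n -> F) (s : nat -> F) : F :=
  \sum_(T : {ffun 'I_(size lam) * 'I_(head 0%N lam) -> {set 'I_n}} | is_svt T)
     beta ^+ ((\sum_p #|T p|) - sumn lam)%N *
     \prod_(p | inbox p) \prod_(r in T p) oplus (x r) (s ((r + p.2 - p.1).+1)%N).

Definition G0 (lam : seq nat) (n : nat) (x : 'I_n -> F) : F :=
  G lam x (fun _ => 0).

End Groth.

Definition elem_sym (F : fieldType) (n : nat) (x : 'I_n -> F) (r : nat) : F :=
  \sum_(I : {set 'I_n} | #|I| == r) \prod_(i in I) x i.

(* Main.v *)
Require Import Defs.
From HB Require Import structures.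
From mathcomp Require Import all_boot all_order all_algebra.
From mathcomp Require Import ring zify.
Set Implicit Arguments. Unset Strict Implicit. Unset Printing Implicit Defensive.
Import Order.TTheory GRing.Theory Num.Theory.
Local Open Scope ring_scope.

Definition lt_sets m (A B : {set 'I_m}) : bool :=
  [forall a in A, forall b in B, (a < b)%N].

Definition colok n r (T : {ffun 'I_r -> {set 'I_n}}) : bool :=
  [forall i, T i != set0] &&
  [forall i : 'I_r, forall j : 'I_r, (j == i.+1 :> nat) ==> lt_sets (T i) (T j)].

Definition W n (S : {set 'I_n}) : {set 'I_n.+1} := [set lift ord_max a | a in S].
Definition res n r (T : {ffun 'I_r -> {set 'I_n.+1}}) : {ffun 'I_r -> {set 'I_n}} :=
  [ffun i => [set a | lift ord_max a \in T i]].

Lemma memW n (S : {set 'I_n}) a : (lift ord_max a \in W S) = (a \in S).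
Proof. by rewrite mem_imset //; apply: lift_inj. Qed.

Lemma MnotW n (S : {set 'I_n}) : ord_max \notin W S.
Proof. by apply/imsetP => -[a _ /eqP]; rewrite (negbTE (neq_lift _ _)). Qed.

Lemma W0 n (S : {set 'I_n}) : (W S == set0) = (S == set0).
Proof. exact: imset_eq0. Qed.

Lemma cardW n (S : {set 'I_n}) : #|W S| = #|S|.
Proof. by rewrite card_imset //; apply: lift_inj. Qed.

Lemma bigW (R : Type) (idx : R) (op : Monoid.com_law idx) n (S : {set 'I_n}) (f : nat -> R) :
  \big[op/idx]_(a in W S) f a = \big[op/idx]_(a in S) f a.
Proof.
rewrite big_imset /=; last by move=> a b _ _; apply: lift_inj.
by apply: eq_bigr => a _; rewrite /bump leqNgt ltn_ord.
Qed.

Lemma Wlt n (S : {set 'I_n}) b : b \in W S -> (b < n)%N.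
Proof. by case/imsetP => a _ ->; rewrite lift_max. Qed.

Lemma ltW n (A B : {set 'I_n}) : lt_sets (W A) (W B) = lt_sets A B.
Proof.
apply/forall_inP/forall_inP => H a aA.
  apply/forall_inP => b bB.
  have := H (lift ord_max a); rewrite memW => /(_ aA)/forall_inP/(_ (lift ord_max b)).
  by rewrite memW !lift_max => /(_ bB).
case/imsetP: aA => a' a'A ->; apply/forall_inP => b /imsetP [b' b'B ->].
by rewrite !lift_max; move/forall_inP: (H a' a'A); apply.
Qed.

Lemma ltWM n (A B : {set 'I_n}) : lt_sets (W A) (ord_max |: W B) = lt_sets A B.
Proof.
rewrite -[RHS]ltW; apply/forall_inP/forall_inP => H a aA; apply/forall_inP => b bB.
  by move/forall_inP: (H a aA); apply; rewrite setU1r.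
case/setU1P: bB => [->|bB]; first by rewrite /= (Wlt aA).
by move/forall_inP: (H a aA); apply.
Qed.

Lemma ltW1 n (A : {set 'I_n}) : lt_sets (W A) [set ord_max].
Proof. by apply/forall_inP => a aA; apply/forall_inP => b; rewrite inE => /eqP ->; exact: Wlt aA. Qed.

Lemma resW n (S : {set 'I_n}) : [set a | lift ord_max a \in W S] = S.
Proof. by apply/setP => a; rewrite inE memW. Qed.

Lemma resWM n (S : {set 'I_n}) : [set a | lift ord_max a \in ord_max |: W S] = S.
Proof.
apply/setP => a; rewrite !inE memW.
by have -> : (lift ord_max a == ord_max) = false by apply/negbTE; rewrite eq_sym neq_lift.
Qed.

Lemma Wres n (A : {set 'I_n.+1}) : ord_max \notin A -> W [set a | lift ord_max a \in A] = A.
Proof.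
move=> MA; apply/setP => b; case: (unliftP ord_max b) => [a ->|->].
  by rewrite memW inE.
by rewrite (negbTE MA) (negbTE (MnotW _)).
Qed.

Lemma WresM n (A : {set 'I_n.+1}) : ord_max \in A -> ord_max |: W [set a | lift ord_max a \in A] = A.
Proof.
move=> MA; apply/setP => b; rewrite inE; case: (unliftP ord_max b) => [a ->|->].
  rewrite in_set1 eq_sym (negbTE (neq_lift _ _)) /=.
  by rewrite memW inE.
by rewrite in_set1 eqxx MA.
Qed.

Lemma colok_max n r (T : {ffun 'I_r.+1 -> {set 'I_n.+1}}) i :
  colok T -> ord_max \in T i -> i = ord_max.
Proof.
case/andP => /forallP ne /forallP lt Mi.
case: (unliftP ord_max i) => [j eq|//]; exfalso.
have jr : (j.+1 < r.+1)%N by rewrite ltnS ltn_ord.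
pose k : 'I_r.+1 := Ordinal jr.
have /set0Pn [b bk] := ne k.
move: (lt i) => /forallP /(_ k); rewrite /= {1}eq lift_max eqxx /=.
move/forall_inP/(_ _ Mi)/forall_inP/(_ _ bk) => /=.
by rewrite ltnNge -ltnS ltn_ord.
Qed.

Section Col.
Variable F : fieldType.
Variable beta : F.

Definition cw n r (x s : nat -> F) (T : {ffun 'I_r -> {set 'I_n}}) : F :=
  beta ^+ ((\sum_i #|T i|) - r)%N *
  \prod_i \prod_(a in T i) oplus beta (x a) (s (a - i).+1%N).

Definition colsum n r (x s : nat -> F) : F :=
  \sum_(T : {ffun 'I_r -> {set 'I_n}} | colok T) cw x s T.

Section Rec.
Variables (n r : nat) (x s : nat -> F).
Local Notation M := (@ord_max n).
Local Notation L := (@ord_max r).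

Lemma part1 :
  \sum_(T : {ffun 'I_r.+1 -> {set 'I_n.+1}} | colok T && (M \notin T L)) cw x s T
  = colsum n r.+1 x s.
Proof.
rewrite (reindex_onto (fun T' : {ffun 'I_r.+1 -> {set 'I_n}} => [ffun i => W (T' i)]) (@res n r.+1)) /=.
  apply: eq_big => [T'|T' _].
    have -> : res [ffun i => W (T' i)] = T' by apply/ffunP => i; rewrite !ffunE resW.
    rewrite eqxx andbT ffunE (negbTE (MnotW _)) andbT.
    rewrite /colok; congr andb; apply: eq_forallb => i; rewrite ffunE ?W0 //.
    by apply: eq_forallb => j; rewrite !ffunE ltW.
  rewrite /cw; congr (_ ^+ (_ - _) * _).
    by apply: eq_bigr => i _; rewrite ffunE cardW.
  apply: eq_bigr => i _; rewrite ffunE.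
  exact: (@bigW F 1 *%R _ _ (fun k => oplus beta (x k) (s (k - i).+1%N))).
move=> T /andP [ok MT]; apply/ffunP => i; rewrite !ffunE Wres //.
by apply/negP => Mi; move: MT; rewrite -(colok_max ok Mi) Mi.
Qed.

Lemma colok_h2 (T' : {ffun 'I_r -> {set 'I_n}}) :
  colok [ffun i => if unlift L i is Some j then W (T' j) else [set M]] = colok T'.
Proof.
rewrite /colok; apply/andP/andP => [[/forallP ne /forallP lt]|[/forallP ne /forallP lt]]; split.
- apply/forallP => j; have := ne (lift L j); by rewrite ffunE liftK W0.
- apply/forallP => i; apply/forallP => j; have /forallP := lt (lift L i).
  by move/(_ (lift L j)); rewrite !ffunE !liftK !lift_max ltW.
- apply/forallP => i; rewrite ffunE; case: unliftP => [j _|_]; first by rewrite W0 ne.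
  by apply/set0Pn; exists M; rewrite in_set1.
- apply/forallP => i; apply/forallP => j; rewrite !ffunE.
  case: (unliftP L i) => [i' ->|->]; case: (unliftP L j) => [j' ->|->];
    rewrite ?liftK ?unlift_none.
  + by rewrite !lift_max ltW; have /forallP := lt i'; apply.
  + by rewrite ltW1 implybT.
  + by rewrite lift_max /= (ltn_eqF (ltn_trans (ltn_ord j') (ltnSn r))).
  + by rewrite /= eqn_leq ltnn andbF.
Qed.

Lemma part2 :
  \sum_(T : {ffun 'I_r.+1 -> {set 'I_n.+1}} | (colok T && (M \in T L)) && (T L == [set M])) cw x s T
  = oplus beta (x n) (s (n - r).+1%N) * colsum n r x s.
Proof.
rewrite (reindex_onto (fun T' : {ffun 'I_r -> {set 'I_n}} =>
    [ffun i => if unlift L i is Some j then W (T' j) else [set M]])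
   (fun T : {ffun 'I_r.+1 -> {set 'I_n.+1}} => [ffun j => [set a | lift M a \in T (lift L j)]])) /=.
  rewrite /colsum big_distrr /=; apply: eq_big => [T'|T' _].
    rewrite colok_h2 ffunE unlift_none in_set1 !eqxx /=.
    have -> : [ffun j => [set a | lift M a \in
       [ffun i => if unlift L i is Some j0 then W (T' j0) else [set M]] (lift L j)]] = T'.
      by apply/ffunP => j; rewrite !ffunE liftK resW.
    by rewrite eqxx !andbT.
  rewrite /cw (bigD1_ord L) //= (bigD1_ord L) //= ffunE unlift_none cards1 big_set1.
  rewrite mulrCA; congr (_ * (_ ^+ _ * _)).
    rewrite add1n subSS; congr (_ - _)%N; apply: eq_bigr => i _.
    by rewrite ffunE liftK cardW.
  apply: eq_bigr => i _; rewrite ffunE liftK.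
  rewrite (@bigW F 1 *%R _ _ (fun k => oplus beta (x k) (s (k - bump r i).+1%N))).
  by apply: eq_bigr => a _; rewrite /bump leqNgt ltn_ord.
move=> T /andP [/andP [ok MT] /eqP TL]; apply/ffunP => i; rewrite !ffunE.
case: unliftP => [j ->|->]; last by rewrite TL.
rewrite ffunE Wres //; apply/negP => Mi.
by have := colok_max ok Mi => /eqP; rewrite eq_sym (negbTE (neq_lift _ _)).
Qed.
Lemma setU1W1 (S : {set 'I_n}) : (M |: W S == [set M]) = (S == set0).
Proof.
rewrite -W0; apply/eqP/eqP => [E|->]; last by rewrite setU0.
apply/setP => b; rewrite in_set0; apply/negbTE/negP => bW.
have : b \in M |: W S by rewrite setU1r.
rewrite E in_set1 => /eqP eb; move: bW; rewrite eb.
by rewrite (negbTE (MnotW _)).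
Qed.

Definition h3 (T' : {ffun 'I_r.+1 -> {set 'I_n}}) : {ffun 'I_r.+1 -> {set 'I_n.+1}} :=
  [ffun i => if i == L then M |: W (T' i) else W (T' i)].

Lemma colok_h3 (T' : {ffun 'I_r.+1 -> {set 'I_n}}) :
  colok (h3 T') && (T' L != set0) = colok T'.
Proof.
rewrite /colok /h3; apply/andP/andP => [[/andP[/forallP ne /forallP lt] neL]|[/forallP ne /forallP lt]].
  split.
    apply/forallP => i; case: (i =P L) => [->//|ni].
    by have := ne i; rewrite ffunE (introF eqP ni) W0.
  apply/forallP => i; apply/forallP => j; apply/implyP => ji.
  have ni : i != L by apply/eqP => iL; move: ji; rewrite iL /= (ltn_eqF (ltn_ord j)).
  have /forallP/(_ j) := lt i; rewrite ji /= !ffunE (negbTE ni).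
  by case: (j =P L) => [jL|nj]; rewrite ?ltWM ?ltW.
split; last by apply: ne.
apply/andP; split.
  apply/forallP => i; rewrite ffunE; case: (i == L); last by rewrite W0 ne.
  by apply/set0Pn; exists M; rewrite setU11.
apply/forallP => i; apply/forallP => j; apply/implyP => ji.
have ni : i != L by apply/eqP => iL; move: ji; rewrite iL /= (ltn_eqF (ltn_ord j)).
have /forallP/(_ j) := lt i; rewrite ji /= !ffunE (negbTE ni).
by case: (j =P L) => [jL|nj]; rewrite ?ltWM ?ltW.
Qed.

Lemma part3 :
  \sum_(T : {ffun 'I_r.+1 -> {set 'I_n.+1}} | (colok T && (M \in T L)) && (T L != [set M])) cw x s T
  = beta * oplus beta (x n) (s (n - r).+1%N) * colsum n r.+1 x s.
Proof.
rewrite (reindex_onto h3 (@res n r.+1)) /=.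
  rewrite /colsum big_distrr /=; apply: eq_big => [T'|T' HP].
    have -> : res (h3 T') = T'.
      by apply/ffunP => i; rewrite !ffunE; case: (i == L); rewrite ?resWM ?resW.
    rewrite eqxx andbT -colok_h3 /h3 ffunE eqxx setU11 andbT setU1W1.
    by [].
  have ok : colok T'.
    move: HP => /andP[/andP[/andP[ok1 _] HL] _]; rewrite -colok_h3 ok1 /=.
    by move: HL; rewrite /h3 ffunE eqxx setU1W1.
  have eS : (\sum_i #|h3 T' i| = (\sum_i #|T' i|).+1)%N.
    rewrite (bigD1_ord L) // [in RHS](bigD1_ord L) //= ffunE eqxx cardsU1 MnotW cardW.
    rewrite -addnA /= add1n; congr ((_ + _).+1)%N; apply: eq_bigr => i _.
    by rewrite /h3 ffunE eq_sym (negbTE (neq_lift _ _)) cardW.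
  have eP : \prod_i \prod_(a in h3 T' i) oplus beta (x a) (s (a - i).+1%N) =
     oplus beta (x n) (s (n - r).+1%N) * \prod_i \prod_(a in T' i) oplus beta (x a) (s (a - i).+1%N).
    rewrite (bigD1_ord L) // [X in _ * X](bigD1_ord L) //= ffunE eqxx.
    rewrite big_setU1 ?MnotW //= mulrA.
    rewrite (@bigW F 1 *%R _ _ (fun k => oplus beta (x k) (s (k - L).+1%N))).
    congr (_ * _ * _); apply: eq_bigr => i _.
    rewrite ffunE eq_sym (negbTE (neq_lift _ _)).
    exact: (@bigW F 1 *%R _ _ (fun k => oplus beta (x k) (s (k - lift L i).+1%N))).
  have ge : (r.+1 <= \sum_i #|T' i|)%N.
    move: ok => /andP[/forallP ne _].
    have : (\sum_(i < r.+1) 1 <= \sum_i #|T' i|)%N.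
      by apply: leq_sum => i _; rewrite card_gt0 ne.
    by rewrite sum_nat_const card_ord muln1.
  rewrite /cw eS eP subSn // exprS; ring.
move=> T /andP [/andP [ok MT] _]; apply/ffunP => i; rewrite !ffunE.
case: (i =P L) => [->|ni]; first by rewrite WresM.
rewrite Wres //; apply/negP => Mi.
by have := colok_max ok Mi.
Qed.
End Rec.
Lemma colsum_rec n r x s :
  colsum n.+1 r.+1 x s =
  (1 + beta * oplus beta (x n) (s (n - r).+1%N)) * colsum n r.+1 x s +
  oplus beta (x n) (s (n - r).+1%N) * colsum n r x s.
Proof.
rewrite /colsum (bigID (fun T : {ffun 'I_r.+1 -> {set 'I_n.+1}} => ord_max \in T ord_max)) /=.
rewrite (bigID (fun T : {ffun 'I_r.+1 -> {set 'I_n.+1}} => T ord_max == [set ord_max])) /=.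
rewrite part2 part3 part1 /colsum; ring.
Qed.

Lemma colsum_n0 n x s : colsum n 0 x s = 1.
Proof.
rewrite /colsum (eq_bigl xpredT); last first.
  by move=> T; apply/andP; split; apply/forallP => -[].
rewrite (eq_bigr (fun _ => 1)); last by move=> T _; rewrite /cw !big_ord0 expr0 mulr1.
by rewrite sumr_const card_ffun card_ord expn0.
Qed.

Lemma colsum_0r r x s : colsum 0 r.+1 x s = 0.
Proof.
rewrite /colsum big1 // => T /andP[/forallP/(_ ord0) ne _]; exfalso.
by move/set0Pn: ne => [[]].
Qed.

Lemma colsum_gt n r x s : (n < r)%N -> colsum n r x s = 0.
Proof.
elim: n r => [|n IH] [|r] //= lt; first by rewrite colsum_0r.
by rewrite colsum_rec !IH ?mulr0 ?addr0 // ltnW.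
Qed.
End Col.

Lemma big_prod1 (R : Type) (idx : R) (op : Monoid.com_law idx) m
  (P : pred ('I_m * 'I_1)) (g : 'I_m * 'I_1 -> R) :
  \big[op/idx]_(p | P p) g p = \big[op/idx]_(i | P (i, ord0)) g (i, ord0).
Proof.
rewrite (reindex (fun i : 'I_m => (i, ord0))) //.
by exists (fun p => p.1) => [i _|[i j] _] //=; rewrite [j]ord1.
Qed.

Lemma big_cast (R : Type) (idx : R) (op : Monoid.com_law idx) m k (e : m = k)
  (P : pred 'I_k) (g : 'I_k -> R) :
  \big[op/idx]_(i : 'I_m | P (cast_ord e i)) g (cast_ord e i) = \big[op/idx]_(i | P i) g i.
Proof.
rewrite (reindex (cast_ord (esym e))) /=.
  by apply: eq_big => [i|i _]; rewrite cast_ordKV.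
by exists (cast_ord e) => i _; rewrite ?cast_ordK ?cast_ordKV.
Qed.

Definition ext (F : fieldType) n (x : 'I_n -> F) (k : nat) : F := odflt 0 (omap x (insub k)).

Lemma extE (F : fieldType) n (x : 'I_n -> F) (i : 'I_n) : ext x i = x i.
Proof. by rewrite /ext valK. Qed.

Lemma inboxT r (p : 'I_(size (nseq r.+1 1%N)) * 'I_1) : inbox p.
Proof.
rewrite /inbox nth_nseq; case: p => i j /=; rewrite [j]ord1 /=.
by rewrite -(size_nseq r.+1 1%N) ltn_ord.
Qed.

Lemma svt_col (F : fieldType) n r (e : size (nseq r.+1 1%N) = r.+1) (f : {ffun 'I_r.+1 -> {set 'I_n}}) :
  is_svt [ffun p : 'I_(size (nseq r.+1 1%N)) * 'I_1 => f (cast_ord e p.1)] = colok f.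
Proof.
rewrite /is_svt /colok.
apply/andP/andP => [[/andP[/forallP ne _] /forallP lt]|[/forallP ne /forallP lt]]; split.
- apply/forallP => i; have := ne (cast_ord (esym e) i, ord0).
  by rewrite inboxT ffunE /= cast_ordKV.
- apply/forallP => i; apply/forallP => j; apply/implyP => ji.
  have /forallP/(_ (cast_ord (esym e) j, ord0)) := lt (cast_ord (esym e) i, ord0).
  by rewrite !inboxT /= ji !ffunE /= !cast_ordKV.
- apply/andP; split.
    by apply/forallP => p; rewrite inboxT ffunE ne.
  apply/forallP => p; apply/forallP => q; apply/implyP => /andP[_ /eqP q2].
  exfalso; move: (ltn_ord q.2); rewrite q2 ltnS leqn0.
  by [].
- apply/forallP => p; apply/forallP => q; apply/implyP => /andP[_ qp].
  have /forallP/(_ (cast_ord e q.1)) := lt (cast_ord e p.1).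
  by rewrite /= qp /= !ffunE.
Qed.

Lemma G_col (F : fieldType) (beta : F) n (x : 'I_n -> F) s r :
  G beta (nseq r.+1 1%N) x s = colsum beta n r.+1 (ext x) s.
Proof.
have e : size (nseq r.+1 1%N) = r.+1 by rewrite size_nseq.
rewrite /G /colsum (reindex_onto
  (fun f : {ffun 'I_r.+1 -> {set 'I_n}} => [ffun p : 'I_(size (nseq r.+1 1%N)) * 'I_1 => f (cast_ord e p.1)])
  (fun T : {ffun 'I_(size (nseq r.+1 1%N)) * 'I_1 -> {set 'I_n}} => [ffun i => T (cast_ord (esym e) i, ord0)])) /=.
  apply: eq_big => [f|f _].
    have -> : [ffun i => [ffun p : 'I_(size (nseq r.+1 1%N)) * 'I_1 => f (cast_ord e p.1)]
        (cast_ord (esym e) i, ord0)] = f by apply/ffunP => i; rewrite !ffunE /= cast_ordKV.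
    by rewrite eqxx andbT svt_col.
  have -> : (1 + sumn (nseq r 1%N))%N = r.+1 by rewrite sumn_nseq mul1n add1n.
  rewrite /cw; congr (_ ^+ (_ - _)%N * _).
    rewrite big_prod1 /=.
    rewrite (eq_bigr (fun i => #|f (cast_ord e i)|)); last by move=> i _; rewrite ffunE.
    exact: (@big_cast nat 0%N addn _ _ e xpredT (fun i => #|f i|)).
  rewrite (eq_bigl xpredT); last by move=> p; rewrite inboxT.
  rewrite big_prod1.
  transitivity (\prod_(i : 'I_(size (nseq r.+1 1%N)) | xpredT (cast_ord e i))
      (fun i : 'I_r.+1 => \prod_(k in f i) oplus beta (ext x k) (s (k - i).+1%N)) (cast_ord e i)).
    by apply: eq_bigr => i _; rewrite ffunE /=; apply: eq_bigr => k _; rewrite extE addn0.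
  exact: big_cast.
move=> T _; apply/ffunP => -[i j]; rewrite !ffunE /= cast_ordK; by rewrite [j]ord1.
Qed.

Section Alg.
Variable F : fieldType.
Variable beta : F.

Lemma key1 u t y : 1 + beta * t != 0 ->
  oplus beta (oplus beta u t) (oplus beta y (ominus1 beta t)) = oplus beta u y.
Proof. move=> h; rewrite /oplus /ominus1; field. exact: h. Qed.

Lemma key2 u t y : 1 + beta * t != 0 ->
  (1 + beta * oplus beta u t) * (1 + beta * oplus beta y (ominus1 beta t)) =
  (1 + beta * u) * (1 + beta * y).
Proof. move=> h; rewrite /oplus /ominus1; field. exact: h. Qed.

Lemma fpowS u t k : fpow beta u t k.+1 = fpow beta u t k * oplus beta u (t k.+1).
Proof. by rewrite /fpow big_nat_recr. Qed.

Lemma fpow0 u t : fpow beta u t 0 = 1.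
Proof. by rewrite /fpow big_geq. Qed.

Lemma claim1 (u : F) (x t : nat -> F) n :
  (forall j, (0 < j <= n)%N -> 1 + beta * t j != 0) ->
  \prod_(i < n) oplus beta u (x i) =
  fpow beta u t n + \sum_(k < n) fpow beta u t k * (1 + beta * oplus beta u (t k.+1)) *
     colsum beta n (n - k) x (fun j => ominus1 beta (t j)).
Proof.
set s := fun j => ominus1 beta (t j).
elim: n => [|n IH] ht; first by rewrite big_ord0 fpow0 big_ord0 addr0.
rewrite big_ord_recr /= IH; last first.
  by move=> j /andP[j0 jn]; apply: ht; rewrite j0 (leq_trans jn).
set w := oplus beta u (x n).
have Hs : forall k : 'I_n.+1, colsum beta n.+1 (n.+1 - k) x s =
   (1 + beta * oplus beta (x n) (s k.+1)) * colsum beta n (n - k).+1 x s +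
   oplus beta (x n) (s k.+1) * colsum beta n (n - k) x s.
  move=> k; have kn : (k <= n)%N by rewrite -ltnS.
  by rewrite subSn // colsum_rec subKn.
rewrite (eq_bigr _ (fun k _ => congr1 (fun z => _ * z) (Hs k))).
rewrite (eq_bigr _ (fun i _ => mulrDr _ _ _)) big_split /=.
set P := (1 + beta * u) * (1 + beta * x n).
have ec : forall i, (i <= n)%N ->
   (1 + beta * oplus beta u (t i.+1)) * (1 + beta * oplus beta (x n) (s i.+1)) = P.
  by move=> i iN; rewrite key2 //; apply: ht.
have ew : forall i, (i <= n)%N ->
   w = oplus beta (oplus beta u (t i.+1)) (oplus beta (x n) (s i.+1)).
  by move=> i iN; rewrite key1 //; apply: ht.
have E1 : \sum_(i < n.+1) fpow beta u t i * (1 + beta * oplus beta u (t i.+1)) *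
     ((1 + beta * oplus beta (x n) (s i.+1)) * colsum beta n (n - i).+1 x s) =
   \sum_(k < n) fpow beta u t k.+1 * P * colsum beta n (n - k) x s.
  rewrite big_ord_recl /= subn0 colsum_gt // !mulr0 add0r.
  apply: eq_bigr => k _; rewrite /bump leq0n add1n subnSK //.
  rewrite -(ec k.+1 (ltn_ord k)); ring.
have E2 : \sum_(i < n.+1) fpow beta u t i * (1 + beta * oplus beta u (t i.+1)) *
     (oplus beta (x n) (s i.+1) * colsum beta n (n - i) x s) =
   \sum_(k < n) fpow beta u t k * (1 + beta * oplus beta u (t k.+1)) *
     (oplus beta (x n) (s k.+1) * colsum beta n (n - k) x s) +
   fpow beta u t n * (1 + beta * oplus beta u (t n.+1)) * oplus beta (x n) (s n.+1).
  by rewrite big_ord_recr /= subnn colsum_n0 mulr1.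
have E3 : \sum_(k < n) fpow beta u t k * (1 + beta * oplus beta u (t k.+1)) *
      colsum beta n (n - k) x s * w =
   \sum_(k < n) fpow beta u t k.+1 * P * colsum beta n (n - k) x s +
   \sum_(k < n) fpow beta u t k * (1 + beta * oplus beta u (t k.+1)) *
     (oplus beta (x n) (s k.+1) * colsum beta n (n - k) x s).
  rewrite -big_split /=; apply: eq_bigr => k _.
  have kn : (k <= n)%N by apply: ltnW.
  rewrite fpowS -(ec k kn) (ew k kn) /oplus; ring.
rewrite E1 E2 mulrDl big_distrl /= E3 (ew n (leqnn n)) fpowS /oplus; ring.
Qed.
Definition esum n (x : nat -> F) (r : nat) : F :=
  \sum_(I : {set 'I_n} | #|I| == r) \prod_(i in I) x i.

Lemma esum_n0 n x : esum n x 0 = 1.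
Proof.
rewrite /esum (eq_bigl (pred1 set0)); last by move=> I; rewrite cards_eq0.
by rewrite big_pred1_eq big_set0.
Qed.

Lemma esum_0r x r : esum 0 x r.+1 = 0.
Proof.
rewrite /esum big1 // => I /eqP cI; exfalso.
by have := max_card (mem I); rewrite card_ord -/(#|I|) cI.
Qed.

Lemma esum_rec n x r : esum n.+1 x r.+1 = esum n x r.+1 + x n * esum n x r.
Proof.
rewrite /esum (bigID (fun I : {set 'I_n.+1} => ord_max \in I)) /= addrC.
congr (_ + _).
  rewrite (reindex_onto (@W n) (fun I : {set 'I_n.+1} => [set a | lift ord_max a \in I])) /=.
    apply: eq_big => [J|J _]; first by rewrite cardW MnotW resW eqxx !andbT.
    exact: (@bigW F 1 *%R _ _ x).
  by move=> I /andP[_ MI]; rewrite Wres.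
rewrite (reindex_onto (fun J : {set 'I_n} => ord_max |: W J)
   (fun I : {set 'I_n.+1} => [set a | lift ord_max a \in I])) /=.
  rewrite big_distrr /=; apply: eq_big => [J|J _].
    by rewrite cardsU1 MnotW cardW add1n eqSS setU11 resWM eqxx !andbT.
  rewrite big_setU1 ?MnotW //=; congr (_ * _).
  exact: (@bigW F 1 *%R _ _ x).
by move=> I /andP[_ MI]; rewrite WresM.
Qed.

Definition cc (s r : nat) : F :=
  if (r <= s)%N then (- beta) ^+ (s - r) * ('C(s.-1, s - r))%:R else 0.

Lemma ccS s k : cc s.+1 k.+1 + beta * cc s k.+1 = cc s k.
Proof.
rewrite /cc; case: (ltngtP k s) => [ks|sk|<-].
- have es : s = (k + (s - k.+1)).+1 by lia.
  move: (s - k.+1)%N es => m ->.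
  have h1 : (k < (k + m).+2)%N by lia.
  rewrite h1.
  have -> : ((k + m).+2 - k.+1 = m.+1)%N by lia.
  have -> : ((k + m).+1 - k = m.+1)%N by lia.
  rewrite /= binS natrD exprS; ring.
- have h1 : (k < s.+1)%N = false by lia.
  by rewrite h1 mulr0 addr0.
- by rewrite ltnSn mulr0 addr0 !subnn /= !bin0.
Qed.
Lemma cc0 k : cc 0 k.+1 = 0.
Proof. by rewrite /cc. Qed.

Lemma sum_cc0 N (f : nat -> F) : \sum_(s < N.+1) cc s 0 * f s = f 0.
Proof.
rewrite big_ord_recl big1 ?addr0; first by rewrite /cc /= expr0 mul1r bin0 mul1r.
by move=> i _; rewrite /cc /bump /= bin_small // mulr0 mul0r.
Qed.

Lemma oplus0 a : oplus beta a 0 = a.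
Proof. by rewrite /oplus addr0 mulr0 addr0. Qed.

Lemma claim3 n x r :
  esum n x r = \sum_(s < n.+1) cc s r * colsum beta n s x (fun _ => 0).
Proof.
elim: n r => [|n IH] [|k].
- by rewrite esum_n0 (sum_cc0 _ (fun s => colsum beta _ s x (fun _ => 0))) colsum_n0.
- by rewrite esum_0r big_ord1 cc0 mul0r.
- by rewrite esum_n0 (sum_cc0 _ (fun s => colsum beta _ s x (fun _ => 0))) colsum_n0.
rewrite esum_rec !IH.
have RH : \sum_(s < n.+2) cc s k.+1 * colsum beta n.+1 s x (fun _ => 0) =
   \sum_(i < n.+1) cc i.+1 k.+1 * ((1 + beta * x n) * colsum beta n i.+1 x (fun _ => 0) + x n * colsum beta n i x (fun _ => 0)).
  rewrite big_ord_recl cc0 mul0r add0r; apply: eq_bigr => i _.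
  by rewrite /bump /= colsum_rec /= oplus0.
rewrite RH.
have SH : \sum_(s < n.+1) cc s k.+1 * colsum beta n s x (fun _ => 0) = \sum_(s < n.+1) cc s.+1 k.+1 * colsum beta n s.+1 x (fun _ => 0).
  rewrite big_ord_recl [RHS]big_ord_recr /= cc0 mul0r add0r colsum_gt // mulr0 addr0.
  by apply: eq_bigr => i _; rewrite /bump /=.
have CC : \sum_(s < n.+1) cc s k * colsum beta n s x (fun _ => 0) =
   \sum_(s < n.+1) cc s.+1 k.+1 * colsum beta n s x (fun _ => 0) + beta * \sum_(s < n.+1) cc s k.+1 * colsum beta n s x (fun _ => 0).
  rewrite mulr_sumr -big_split; apply: eq_bigr => i _ /=.
  by rewrite -ccS; ring.
rewrite CC SH mulrDr !mulr_sumr -!big_split; apply: eq_bigr => i _ /=; ring.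
Qed.
End Alg.

Section Fin.
Variable F : fieldType.
Variable beta : F.

Lemma colsum_ext n r x (s s' : nat -> F) : (forall j, s j = s' j) ->
  colsum beta n r x s = colsum beta n r x s'.
Proof.
move=> e; apply: eq_bigr => T _; rewrite /cw; congr (_ * _).
by apply: eq_bigr => i _; apply: eq_bigr => a _; rewrite e.
Qed.

Lemma rhs_conv n (x : 'I_n -> F) (a : nat -> F) s :
  \sum_(1 <= r < n.+1) a r * G beta (nseq r 1%N) x s =
  \sum_(k < n) a (n - k)%N * colsum beta n (n - k) (ext x) s.
Proof.
rewrite big_add1 /= big_mkord (reindex_inj rev_ord_inj) /=.
apply: eq_bigr => k _; rewrite subnSK // G_col.
by rewrite subnSK.
Qed.

Lemma fpow_0 u k : fpow beta u (fun _ => 0) k = u ^+ k.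
Proof.
rewrite /fpow (eq_bigr (fun _ => u)); last by move=> i _; rewrite oplus0.
by rewrite prodr_const_nat subn1.
Qed.

End Fin.


Theorem mainTheorem5 :
  (forall (F : fieldType) (n : nat) (beta u : F) (x : 'I_n -> F) (t : nat -> F),
     (forall j, (0 < j <= n)%N -> 1 + beta * t j != 0) ->
     \prod_(i < n) oplus beta u (x i) =
       fpow beta u t n +
       \sum_(1 <= r < n.+1)
          fpow beta u t (n - r) * (1 + beta * oplus beta u (t (n.+1 - r)%N)) *
          G beta (nseq r 1%N) x (fun j => ominus1 beta (t j))) /\
  (forall (F : fieldType) (n : nat) (beta u : F) (x : 'I_n -> F),
     \prod_(i < n) oplus beta u (x i) =
       u ^+ n + (1 + beta * u) *
         \sum_(1 <= r < n.+1) u ^+ (n - r) * G0 beta (nseq r 1%N) x) /\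
  (forall (F : fieldType) (n : nat) (beta : F) (x : 'I_n -> F) (r : nat),
     (1 <= r <= n)%N ->
     elem_sym x r =
       \sum_(r <= s < n.+1)
          (- beta) ^+ (s - r) * ('C(s.-1, s - r))%:R * G0 beta (nseq s 1%N) x).
Proof.
have prodE : forall (F : fieldType) (beta u : F) n (x : 'I_n -> F),
    \prod_(i < n) oplus beta u (x i) = \prod_(i < n) oplus beta u (ext x i).
  by move=> F beta u n x; apply: eq_bigr => i _; rewrite extE.
split; [|split].
- move=> F n beta u x t ht.
  rewrite (rhs_conv beta x (fun r => fpow beta u t (n - r) * (1 + beta * oplus beta u (t (n.+1 - r)%N)))).
  rewrite prodE (@claim1 F beta u (ext x) t n ht); congr (_ + _); apply: eq_bigr => k _.
  have kn : (k <= n)%N by apply: ltnW.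
  rewrite subKn //; have -> : (n.+1 - (n - k) = k.+1)%N by lia.
  by [].
- move=> F n beta u x.
  rewrite /G0 (rhs_conv beta x (fun r => u ^+ (n - r))) mulr_sumr.
  have ht : forall j, (0 < j <= n)%N -> 1 + beta * (fun _ => (0 : F)) j != 0.
    by move=> j _; rewrite mulr0 addr0 oner_neq0.
  rewrite prodE (@claim1 F beta u (ext x) _ n ht) fpow_0; congr (_ + _); apply: eq_bigr => k _.
  have kn : (k <= n)%N by apply: ltnW.
  rewrite subKn // fpow_0 oplus0 (@colsum_ext F beta n (n - k) (ext x) _ (fun _ => 0)); first by ring.
  by move=> j; rewrite /ominus1 mulr0 addr0 oppr0 mul0r.
- move=> F n beta x r /andP[r1 rn].
  have -> : elem_sym x r = esum n (ext x) r.
    by apply: eq_bigr => I _; apply: eq_bigr => i _; rewrite extE.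
  rewrite (claim3 beta) -(big_mkord xpredT (fun s => cc beta s r * colsum beta n s (ext x) (fun _ => 0))).
  rewrite (@big_cat_nat _ _ _ r 0 n.+1) /=; [|by []|by apply: leqW].
  rewrite big_nat big1 ?add0r; last first.
    by move=> i /andP[_ ir]; rewrite /cc leqNgt ir mul0r.
  apply: eq_big_nat => s' /andP[rs _].
  case: s' rs => [|s'] rs; first by move: (leq_trans r1 rs).
  by rewrite /G0 G_col /cc rs.
Qed.
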